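(* Let $n$ and $k$ be integers with $n\ge 2$ and $2\le k\le 2^{n-1}+1$. Then $$v_2\big(s(2^n,2^n-k)\big)=\begin{cases} n-1-v_2(k) & \text{if } k \text{ is even},\\ 2n-2-v_2(k-1) & \text{if } k \text{ is odd}.\end{cases}$$
   Context: The (unsigned) Stirling numbers of the first kind $s(n,k)$ are defined by $x(x+1)\cdots(x+n-1)=\sum_{k=0}^n s(n,k)x^k$. $v_2$ denotes the $2$-adic valuation. *)

(* Defs.v *)
From HB Require Import structures.
From mathcomp Require Import all_boot all_order all_algebra.
Set Implicit Arguments. Unset Strict Implicit. Unset Printing Implicit Defensive.
Import GRing.Theory.
Local Open Scope ring_scope.

Definition rising_poly (n : nat) : {poly nat} := \prod_(i < n) ('X + (i : nat)%:R%:P).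

Definition stirling1 (n k : nat) : nat := ((rising_poly n)`_k)%R.

(* 2-adic valuation of a natural number (meaningful for nonzero arguments). *)
Definition v2 (m : nat) : nat := logn 2 m.

(* Main.v *)
Require Import Defs.
From mathcomp Require Import all_boot all_order all_algebra.
From mathcomp Require Import ring zify.
Import GRing.Theory Num.Theory.
Set Implicit Arguments. Unset Strict Implicit. Unset Printing Implicit Defensive.

Section Helpers.
Local Open Scope ring_scope.
Fixpoint elsym {R : nzSemiRingType} (s : seq R) (k : nat) : R :=
  match s with
  | [::] => (k == 0%N)%:R
  | a :: s' => if k is k'.+1 then elsym s' k + a * elsym s' k' else 1
  end.

Lemma elsym0 (R : nzSemiRingType) (s : seq R) : elsym s 0 = 1.
Proof. by case: s. Qed.

Lemma esym_big (R : nzSemiRingType) (s : seq R) k : (size s < k)%N -> elsym s k = 0.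
Proof.
elim: s k => [|a s IH] [|k] //= hk.
by rewrite !IH ?mulr0 ?addr0 // ltnW.
Qed.

Lemma coef_prodX (s : seq nat) j :
  (\prod_(a <- s) ('X + a%:P))`_j = if (j <= size s)%N then elsym s (size s - j) else 0.
Proof.
elim: s j => [|a s IH] j.
  by rewrite big_nil coef1; case: j.
rewrite big_cons; move: (\prod_(a <- s) _) IH => p IH.
rewrite mulrDl coefD coefXM coefCM.
case: j => [|j].
  by rewrite eqxx IH leq0n subn0 add0r /= subn0 (@esym_big _ _ (size s).+1) ?add0r.
rewrite /= !IH ltnS subSS.
case: (ltngtP j (size s)) => hj.
- by rewrite -(subnSK hj).
- by rewrite mulr0 addr0.
- by rewrite hj subnn /= elsym0 mulr0 addr0.
Qed.

Lemma esym_Posz (s : seq nat) k : elsym (map Posz s) k = Posz (elsym s k).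
Proof.
elim: s k => [|a s IH] [|k] //=.
by rewrite !IH PoszD PoszM.
Qed.

Lemma stirling_esym N k : (k <= N)%N -> stirling1 N (N - k) = elsym (iota 0 N) k.
Proof.
move=> hk; rewrite /stirling1 /rising_poly.
rewrite -(big_mkord xpredT (fun i : nat => 'X + i%:R%:P)).
rewrite /index_iota subn0.
rewrite (eq_bigr (fun a : nat => 'X + a%:P)); last by move=> i _; rewrite natn.
by rewrite coef_prodX size_iota leq_subr subKn.
Qed.

Definition psum (s : seq int) e := \sum_(a <- s) a ^+ e.
Definition Tn (s : seq int) k := \sum_(i < k) (-1)^+i * psum s i.+1 * elsym s (k - i.+1).

Lemma esym_cons (a : int) s j :
  elsym (a::s) j = elsym s j + (if j is j'.+1 then a * elsym s j' else 0).
Proof. by case: j => [|j] /=; rewrite ?elsym0 ?addr0. Qed.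

Lemma U_lemma (a : int) s k :
  \sum_(i < k.+1) (-1)^+i * a^+i.+1 * elsym (a::s) (k - i) = a * elsym s k.
Proof.
elim: k => [|k IH].
  by rewrite big_ord1 /= expr0 mul1r expr1 elsym0 mulr1.
rewrite big_ord_recl /= subn0.
rewrite (eq_bigr (fun i : 'I_k.+1 => - a * ((-1)^+i * a^+i.+1 * elsym (a::s) (k - i)))); last first.
  by move=> i _; rewrite /= subSS !exprS; ring.
by rewrite -mulr_sumr IH /=; ring.
Qed.

Lemma newton (s : seq int) k : k%:R * elsym s k = Tn s k.
Proof.
elim: s k => [|a s IH] k.
  rewrite /Tn big1 => [|i _]; last by rewrite /psum big_nil mulr0 mul0r.
  by case: k => [|k] /=; rewrite ?mulr0 ?mul0r.
case: k => [|k]; first by rewrite mul0r /Tn big_ord0.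
rewrite /Tn.
rewrite (eq_bigr (fun i : 'I_k.+1 => (-1)^+i * a^+i.+1 * elsym (a::s) (k - i) +
   ((-1)^+i * psum s i.+1 * elsym s (k.+1 - i.+1) +
    (-1)^+i * psum s i.+1 * (if (k - i)%N is j.+1 then a * elsym s j else 0)))); last first.
  move=> i _; rewrite subSS /psum big_cons esym_cons; ring.
rewrite big_split /= U_lemma big_split /= -/(Tn s k.+1) -IH.
rewrite big_ord_recr /= subnn mulr0 addr0.
rewrite (eq_bigr (fun i : 'I_k => a * ((-1)^+i * psum s i.+1 * elsym s (k - i.+1)))); last first.
  by move=> i _; rewrite /= -(subnSK (ltn_ord i)); ring.
rewrite -mulr_sumr -/(Tn s k) -IH /=.
rewrite -addn1 natrD; ring.
Qed.

Definition vz (x : int) := logn 2 `|x|%N.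
Definition ex (x : int) (a : nat) := (x != 0) && (vz x == a).

Lemma dvd2P (x : int) a : x != 0 -> (2^+a %| x)%Z = (a <= vz x)%N.
Proof.
move=> hx; rewrite dvdzE abszX /vz pfactor_dvdn //.
by rewrite absz_gt0.
Qed.

Lemma ex_dvd x a b : ex x a -> (2^+b %| x)%Z = (b <= a)%N.
Proof. by case/andP=> hx /eqP <-; rewrite dvd2P. Qed.

Lemma dvd_exp_le (x : int) a b : (b <= a)%N -> (2^+a %| x)%Z -> (2^+b %| x)%Z.
Proof. by move=> hab; apply: dvdz_trans; apply: dvdz_exp2l. Qed.

Lemma ex_mul x y a b : ex x a -> ex y b -> ex (x * y) (a + b).
Proof.
case/andP=> hx /eqP ha; case/andP=> hy /eqP hb.
rewrite /ex mulf_neq0 //= /vz abszM lognM ?absz_gt0 //.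
by rewrite -/(vz x) -/(vz y) ha hb.
Qed.

Lemma ex_opp x a : ex (- x) a = ex x a.
Proof. by rewrite /ex oppr_eq0 /vz abszN. Qed.

Lemma ex_add x y a : ex x a -> (2^+a.+1 %| y)%Z -> ex (x + y) a.
Proof.
move=> hxa hy.
have hxa' := ex_dvd _ hxa.
have key : (2^+a.+1 %| x + y)%Z -> False.
  move=> h; have : (2^+a.+1 %| (x + y) - y)%Z by rewrite rpredB.
  by rewrite addrK hxa' ltnn.
have hz : x + y != 0.
  by apply/negP=> /eqP h; apply: key; rewrite h dvdz0.
rewrite /ex hz /= eqn_leq -dvd2P // rpredD ?hxa' //=; last by apply: (dvd_exp_le (a:=a.+1)).
rewrite andbT leqNgt -dvd2P //; apply/negP.
exact: key.
Qed.

Lemma ex_cancel k x t a : ex (k * x) t -> ex k a -> ex x (t - a).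
Proof.
case/andP=> hkx /eqP ht; case/andP=> hk /eqP ha.
have hx : x != 0 by apply: contraNneq hkx => ->; rewrite mulr0.
move: ht; rewrite /ex hx /=; rewrite /vz abszM lognM ?absz_gt0 // -/(vz k) -/(vz x) ha.
by move=> <-; rewrite addKn.
Qed.

Lemma ex_nat (m : nat) : (0 < m)%N -> ex m%:Z (logn 2 m).
Proof. by move=> hm; rewrite /ex /vz absz_nat eqxx andbT -lt0n. Qed.


Lemma Posz2X n : Posz (2^n)%N = 2^+n.
Proof. by rewrite -natz natrX. Qed.

Definition Pn n e : int := \sum_(j < 2^n) (j%:Z)^+e.

Lemma binom_dvd (x d : int) e : (d^+2 %| (x + d)^+e - x^+e - e%:R * d * x^+e.-1)%Z.
Proof.
elim: e => [|e IH]; first by rewrite !expr0 !mul0r subrr ?subr0 ?oppr0 ?addr0 dvdz0.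
case: e IH => [|e] IH.
  by rewrite !expr1 expr0 mulr1 mul1r (_ : x + d - x - d = 0) ?dvdz0 //; ring.
case/dvdzP: IH => q hq; apply/dvdzP; exists (q * (x + d) + e.+1%:R * x^+e).
have h : (x + d)^+e.+1 = q * d^+2 + x^+e.+1 + e.+1%:R * d * x^+e by rewrite -hq /=; ring.
rewrite exprS h /= (mulrSr 1 e.+1) !exprS; ring.
Qed.

Lemma Pn_rec n e : exists2 Z, ((2^+n)^+2 %| Z)%Z &
  Pn n.+1 e = 2 * Pn n e + (e%:R * 2^+n * Pn n e.-1 + Z).
Proof.
exists (\sum_(j < 2^n) ((j%:Z + 2^+n)^+e - (j%:Z)^+e - e%:R * 2^+n * (j%:Z)^+e.-1)).
  by apply: rpred_sum => j _; apply: binom_dvd.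
rewrite /Pn expnS mul2n -addnn big_split_ord /=.
rewrite [X in X = _](_ : _ = \sum_(j < 2^n) (j%:Z)^+e + \sum_(j < 2^n) (j%:Z + 2^+n)^+e); last first.
  by congr (_ + _); apply: eq_bigr => j _; rewrite /= PoszD Posz2X addrC.
rewrite !sumrB -mulr_sumr.
ring.
Qed.

Lemma ex2 : ex 2 1.
Proof. by rewrite /ex /vz /= (@pfactorK 2 1). Qed.

Lemma ex1 : ex 1 0.
Proof. by rewrite /ex /vz /= logn1. Qed.

Lemma ex_self x : x != 0 -> ex x (vz x).
Proof. by move=> hx; rewrite /ex hx eqxx. Qed.

Lemma Pn0 n : Pn n 0 = 2^+n.
Proof.
rewrite /Pn (eq_bigr (fun _ => 1)) => [|j _]; last by rewrite expr0.
by rewrite sumr_const card_ord -Posz2X -natz.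
Qed.

Lemma Pn_even n e : (0 < n)%N -> (0 < e)%N -> (e == 1%N) || ~~ odd e -> ex (Pn n e) n.-1.
Proof.
elim: n => [//|n IH] _ he hodd.
case: n IH => [|n] IH.
  rewrite /Pn /= big_ord_recr big_ord1 /= expr0n expr1n.
  by clear IH; case: e he {hodd} => [|e] //= _; rewrite add0r ex1.
have {}IH := IH erefl he hodd.
have [Z hZ ->] := Pn_rec n.+1 e.
apply: ex_add; first by rewrite -add1n; apply: ex_mul ex2 IH.
apply: rpredD; last first.
  by apply: (dvd_exp_le (a := (n.+1 * 2)%N)); [lia | rewrite exprM].
case/orP: hodd => [/eqP -> | hev].
  rewrite /= Pn0 mul1r -exprD; apply: dvdz_exp2l; lia.
have he2 : e = (e./2).*2 by rewrite -[e in LHS]odd_double_half (negbTE hev).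
apply/dvdzP; exists ((e./2)%:R * Pn n.+1 e.-1).
rewrite {1}he2 -mul2n natrM /= !exprS; ring.
Qed.

Lemma refl_sum m e : (0 < e)%N ->
  \sum_(j < m) (m%:Z - j%:Z)^+e = \sum_(j < m) (j%:Z)^+e + (m%:Z)^+e.
Proof.
move=> he; elim: m => [|m IH].
  by rewrite !big_ord0 expr0n add0r; case: e he.
rewrite big_ord_recl big_ord_recr /= subr0.
rewrite (eq_bigr (fun i : 'I_m => (m%:Z - i%:Z)^+e)); last first.
  by move=> i _; rewrite /bump leq0n add1n !intS; congr (_ ^+ _); ring.
by rewrite IH; ring.
Qed.

Lemma Pn_odd n e : (0 < n)%N -> odd e -> (3 <= e)%N -> (2^+(2*n-2) %| Pn n e)%Z.
Proof.
case: e => [//|e] hn ho he.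
have hoe : odd e = false by move: ho => /= /negbTE.
pose N : int := 2^+n.
pose Z' := \sum_(j < 2^n) ((N - j%:Z)^+e.+1 + (j%:Z)^+e.+1 - e.+1%:R * N * (j%:Z)^+e).
have hZ : (N^+2 %| Z')%Z.
  apply: rpred_sum => j _.
  have := binom_dvd (- j%:Z) N e.+1.
  rewrite (exprNn _ e.+1) (exprNn _ e) -(signr_odd _ e.+1) -(signr_odd _ e) ho hoe expr0 expr1 mul1r mulN1r opprK.
  by rewrite (addrC (- _)).
have h1 := @refl_sum (2^n) e.+1 (ltn0Sn e).
rewrite Posz2X -/N in h1.
have hZ'eq : Z' = \sum_(j<2^n) (N - j%:Z)^+e.+1 + Pn n e.+1 - e.+1%:R * N * Pn n e.
  by rewrite /Z' /Pn sumrB big_split mulr_sumr.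
rewrite h1 in hZ'eq.
move: Z' hZ hZ'eq => Z' hZ hZ'eq.
have h2 : 2 * Pn n e.+1 = Z' - N^+e.+1 + e.+1%:R * N * Pn n e by rewrite hZ'eq; ring.
have hP' : ex (Pn n e) n.-1.
  by apply: Pn_even => //; [lia | rewrite hoe orbT].
have h3 : (2^+(2*n-1) %| 2 * Pn n e.+1)%Z.
  rewrite h2; apply: rpredD; first apply: rpredB.
  - by apply: (dvd_exp_le (a := (n * 2)%N)); [lia | rewrite exprM].
  - by rewrite /N -exprM; apply: dvdz_exp2l; nia.
  - rewrite -mulrA; apply: dvdz_mull.
    rewrite (_ : (2 * n - 1 = n + n.-1)%N); last by lia.
    by rewrite exprD; apply: dvdz_mul; [apply: dvdzz | rewrite (ex_dvd _ hP')].
have [->|hP] := eqVneq (Pn n e.+1) 0; first by rewrite dvdz0.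
rewrite dvd2P //.
have := ex_mul ex2 (ex_self hP).
move/ex_dvd => hh; move: h3; rewrite hh.
lia.
Qed.

End Helpers.

Lemma v2_le j m : (0 < j)%N -> (j <= 2^m)%N -> (v2 j <= m)%N.
Proof.
move=> hj hjm; rewrite -(leq_exp2l _ _ (ltnSn 1)).
exact: leq_trans (dvdn_leq hj (pfactor_dvdnn 2 j)) hjm.
Qed.

Lemma v2_lt j m : (0 < j)%N -> (j < 2^m)%N -> (v2 j < m)%N.
Proof.
move=> hj hjm; rewrite -(ltn_exp2l _ _ (ltnSn 1)).
exact: leq_ltn_trans (dvdn_leq hj (pfactor_dvdnn 2 j)) hjm.
Qed.

Lemma v2_even j : (0 < j)%N -> ~~ odd j -> (1 <= v2 j)%N.
Proof. by move=> hj hev; rewrite /v2 -pfactor_dvdn // expn1 dvdn2. Qed.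

Lemma v2_odd j : odd j -> v2 j = 0%N.
Proof. by move=> ho; rewrite /v2 logn_coprime // coprime2n. Qed.

Section Main.
Local Open Scope ring_scope.

Definition Sn n : seq int := map Posz (iota 0 (2^n)).

Lemma psum_Sn n e : psum (Sn n) e = Pn n e.
Proof. by rewrite /psum /Sn big_map /Pn -(big_mkord xpredT (fun j : nat => (j%:Z)^+e)) /index_iota subn0. Qed.

Lemma newtonS n k : k%:R * elsym (Sn n) k =
  \sum_(i < k) (-1)^+i * Pn n i.+1 * elsym (Sn n) (k - i.+1).
Proof. by rewrite newton /Tn; apply: eq_bigr => i _; rewrite psum_Sn. Qed.

Lemma E1 n : (0 < n)%N -> ex (elsym (Sn n) 1) n.-1.
Proof.
move=> hn; have := newtonS n 1; rewrite big_ord1 /= mul1r expr0 mul1r elsym0 mulr1 => ->.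
by apply: Pn_even.
Qed.

Lemma main n : (2 <= n)%N -> forall k, (2 <= k)%N -> (k <= 2^n.-1 + 1)%N ->
  ex (elsym (Sn n) k) (if ~~ odd k then (n - 1 - v2 k)%N else (2 * n - 2 - v2 (k - 1))%N).
Proof.
move=> hn k; elim/ltn_ind: k => k IH hk2 hkb.
set E := elsym (Sn n).
have hE1 : ex (E 1%N) (n - 1) by rewrite subn1; apply: E1; lia.
have hB : (2 <= 2^n.-1)%N by rewrite -[2%N]/(2^1)%N leq_exp2l //; lia.
have lbE : forall j, (0 < j)%N -> (j < k)%N -> (j < 2^n.-1)%N ->
    (2^+(if odd j then n.-1 else 1%N) %| E j)%Z.
  move=> j hj0 hjk hjB.
  case: (boolP (j == 1%N)) => [/eqP -> | hj1].
    by rewrite /= (ex_dvd _ hE1); lia.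
  have := IH j hjk ltac:(lia) ltac:(lia).
  have hv := v2_lt hj0 hjB.
  case: (boolP (odd j)) => hoj /= hex; rewrite (ex_dvd _ hex).
    have hv' : (v2 (j - 1) < n.-1)%N by apply: v2_lt; lia.
    lia.
  lia.
have hP1 : ex (Pn n 1) (n - 1) by rewrite subn1; apply: Pn_even => //; lia.
have hnewt := newtonS n k.
have hBev : odd (2^n.-1) = false by rewrite oddX orbF; apply/negbTE/eqP; lia.
case: k IH hk2 hkb lbE hnewt => [|k] IH hk2 hkb lbE hnewt; first by [].
case: (boolP (odd k.+1)) => hok /=.
-
  have hkev : odd k = false by move: hok; rewrite /= => /negbTE.
  rewrite big_ord_recl /= expr0 mul1r subSS subn0 in hnewt.
  have hkB : (k <= 2^n.-1)%N by lia.
  have hk1 : (0 < k)%N by lia.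
  have hEk := IH k (ltnSn k) ltac:(lia) ltac:(lia).
  rewrite hkev /= in hEk.
  have hv1 := v2_even hk1 (negbT hkev).
  have hv2 := v2_le hk1 hkB.
  have hA := ex_mul hP1 hEk.
  have hsum : ex (k.+1%:R * E k.+1) ((n - 1) + (n - 1 - v2 k)).
    rewrite hnewt; apply: ex_add hA _.
    apply: rpred_sum => i _; have hik := ltn_ord i.
    rewrite /bump /= add1n subSS -mulrA; apply: dvdz_mull.
    apply: (dvd_exp_le (a := (2 * n - 2)%N)); first lia.
    case: (boolP (odd i)) => hoi.
      by apply: dvdz_mulr; apply: Pn_odd; [lia | rewrite !oddS negbK hoi | lia].
    have hoj : odd (k - i.+1) by rewrite oddB ?hkev //= hoi.
    have hj0 := odd_gt0 hoj.
    have := lbE (k - i.+1)%N hj0 ltac:(lia) ltac:(lia); rewrite hoj => hE.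
    have hP := Pn_even (n := n) (e := i.+2) ltac:(lia) (ltn0Sn _) ltac:(by rewrite !oddS negbK hoi orbT).
    rewrite (_ : (2 * n - 2 = n.-1 + n.-1)%N); last by lia.
    by rewrite exprD; apply: dvdz_mul => //; rewrite (ex_dvd _ hP).
  rewrite natz in hsum; have := ex_cancel hsum (ex_nat (ltn0Sn k)).
  rewrite -/(v2 k.+1) (v2_odd hok) subSS subn0.
  by rewrite subn0 (_ : (n - 1 + (n - 1 - v2 k) = 2 * n - 2 - v2 k)%N) //; lia.
-
  have hko : odd k by move: hok; rewrite oddS negbK.
  rewrite big_ord_recr /= subnn elsym0 mulr1 -signr_odd hko expr1 mulN1r in hnewt.
  have hkB : (k < 2^n.-1)%N.
    have : (k.+1 != 2^n.-1 + 1)%N by apply: contraNneq hok => ->; rewrite addn1 /= hBev.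
    lia.
  have hsum : ex (k.+1%:R * E k.+1) (n - 1).
    rewrite hnewt addrC; apply: ex_add; first by rewrite ex_opp subn1; apply: Pn_even => //; [lia | rewrite hok orbT].
    apply: rpred_sum => i _; have hik := ltn_ord i.
    rewrite /= subSS -mulrA; apply: dvdz_mull.
    case: (boolP (odd i)) => hoi.
      have hoj : odd (k - i) = false by rewrite oddB ?hko ?hoi // ltnW.
      have hj0 : (0 < k - i)%N by lia.
      have := lbE (k - i)%N hj0 ltac:(lia) ltac:(lia); rewrite hoj => hE.
      have hP := Pn_even (n := n) (e := i.+1) ltac:(lia) (ltn0Sn _) ltac:(by rewrite oddS negbK hoi orbT).
      apply: (dvd_exp_le (a := (n.-1 + 1)%N)); first lia.
      by rewrite exprD; apply: dvdz_mul => //; rewrite (ex_dvd _ hP).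
    apply: (dvd_exp_le (a := (2 * n - 2)%N)); first lia.
    case: (posnP i) => [hi0 | hi0].
      rewrite hi0 subn0.
      have := lbE k ltac:(lia) ltac:(lia) hkB; rewrite hko => hE.
      rewrite (_ : (2 * n - 2 = n.-1 + n.-1)%N); last by lia.
      rewrite exprD; apply: dvdz_mul => //; rewrite (ex_dvd _ hP1); lia.
    apply: dvdz_mulr; apply: Pn_odd; [lia | by rewrite oddS hoi | ].
    have : (i : nat) != 1%N by apply: contraNneq hoi => ->.
    lia.
  rewrite natz in hsum; have := ex_cancel hsum (ex_nat (ltn0Sn k)).
  by rewrite -/(v2 k.+1).
Qed.

End Main.

Theorem corollary1p3 (n k : nat) :
  (2 <= n)%N -> (2 <= k)%N -> (k <= 2 ^ n.-1 + 1)%N ->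
  v2 (stirling1 (2 ^ n) (2 ^ n - k)) =
    (if ~~ odd k then (n - 1 - v2 k)%N else (2 * n - 2 - v2 (k - 1))%N).
Proof.
move=> hn hk2 hkb.
have h2n : (2 ^ n = 2 * 2 ^ n.-1)%N by rewrite -expnS prednK //; lia.
have hB : (1 <= 2 ^ n.-1)%N by rewrite expn_gt0.
rewrite stirling_esym; last by lia.
have := main hn hk2 hkb.
rewrite /Sn esym_Posz => /andP [_ /eqP].
by rewrite /vz absz_nat.
Qed.
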